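(* Under the standing setup with $\mathrm{Var}(X_N)>0$: (i) if $\delta_W\ge 0$, then $D\in[D^-_{MOB},\min\{D^+_{MOB},D_{ER}\}]$; (ii) if $\delta_W\le 0$, then $D\in[\max\{D^-_{MOB},D_{ER}\},D^+_{MOB}]$; (iii) the bounds in (i) and (ii) are sharp under the respective sign assumption (absent additional information).
   Context: Let $(X,Y,N)$ be a random triple with $X\in\{0,1\}$, $Y$ real-valued, $N$ taking values in a finite set $\mathcal N$. Write $p_n=\Pr(N=n)$, $X_n=\mathbb E[X\mid N=n]$, $Y_n=\mathbb E[Y\mid N=n]$, $X_N=\mathbb E[X\mid N]$, $Y_N=\mathbb E[Y\mid N]$. Assume some $n$ has $p_n>0$ and $X_n\in(0,1)$, and fix reals $\underline Y\le\overline Y$ with $\mathbb E[Y\mid X=x,N=n]\in[\underline Y,\overline Y]$ whenever $\Pr(X=x,N=n)>0$. $D=\mathbb E[Y\mid X=1]-\mathbb E[Y\mid X=0]$; $\delta_W=\mathbb E[\mathrm{Cov}(Y,X_N\mid X)]$; $D_{ER}=\mathrm{Cov}(Y_N,X_N)/\mathrm{Var}(X_N)$; $D^+_{MOB}=\big(\mathbb E[\min\{Y_N-\underline Y(1-X_N),\overline Y X_N\}]-\mathbb E[X]\mathbb E[Y]\big)/\mathrm{Var}(X)$, $D^-_{MOB}=\big(\mathbb E[Y](1-\mathbb E[X])-\mathbb E[\min\{Y_N-\underline Y X_N,\overline Y(1-X_N)\}]\big)/\mathrm{Var}(X)$. Sharpness under an assumption $\mathcal A$: the parameter lies in the interval for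 every joint distribution satisfying the standing assumptions and $\mathcal A$, and every value in the interval is attained by some joint distribution of $(X,Y,N)$ with the same observed $(p_n,X_n,Y_n)_n$, satisfying the standing bound and $\mathcal A$. *)

(* Defs.v *)
From HB Require Import structures.
From mathcomp Require Import all_boot all_order all_algebra.
From mathcomp Require Import all_classical all_reals all_analysis.
Set Implicit Arguments. Unset Strict Implicit. Unset Printing Implicit Defensive.
Import Order.TTheory GRing.Theory Num.Theory.
Local Open Scope classical_set_scope.
Local Open Scope ring_scope.

Section Defs.
Context {R : realType} {I : finType} {d : measure_display} {T : measurableType d}.
Variable (P : probability T R).

Definition Pr (A : set T) : R := fine (P A).
Definition Ex (f : T -> R) : R := fine ('E_P[f])%E.
Definition condE (A : set T) (f : T -> R) : R :=
  Ex (fun w => f w * \1_A w) / Pr A.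
Definition condCov (A : set T) (f g : T -> R) : R :=
  condE A (fun w => f w * g w) - condE A f * condE A g.
Definition Cov (f g : T -> R) : R := fine (covariance P f g).
Definition Var (f : T -> R) : R := fine (variance P f).

Variables (X : T -> bool) (Y : T -> R) (N : T -> I) (Ylow Yhigh : R).

Definition evX (x : bool) : set T := X @^-1` [set x].
Definition evN (n : I) : set T := N @^-1` [set n].
Definition Xr : T -> R := fun w => (X w)%:R.

Definition p_ (n : I) : R := Pr (evN n).
Definition X_ (n : I) : R := condE (evN n) Xr.
Definition Y_ (n : I) : R := condE (evN n) Y.
Definition XN : T -> R := fun w => X_ (N w).
Definition YN : T -> R := fun w => Y_ (N w).

Definition Dpar : R := condE (evX true) Y - condE (evX false) Y.
Definition deltaW : R := Ex (fun w => condCov (evX (X w)) Y XN).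
Definition D_ER : R := Cov YN XN / Var XN.
Definition D_MOB_plus : R :=
  (Ex (fun w => Num.min (YN w - Ylow * (1 - XN w)) (Yhigh * XN w))
     - Ex Xr * Ex Y) / Var Xr.
Definition D_MOB_minus : R :=
  (Ex Y * (1 - Ex Xr)
     - Ex (fun w => Num.min (YN w - Ylow * XN w) (Yhigh * (1 - XN w)))) / Var Xr.

Definition standing : Prop :=
  [/\ (forall x, measurable (evX x)),
      (forall n, measurable (evN n)),
      measurable_fun setT Y,
      P.-integrable setT (EFin \o Y) &
      [/\
      (exists n, 0 < p_ n /\ 0 < X_ n < 1),
      Ylow <= Yhigh &
      (forall x n, 0 < Pr (evX x `&` evN n) ->
         Ylow <= condE (evX x `&` evN n) Y <= Yhigh)]].

End Defs.

(* Main.v *)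
Require Import Defs.
From HB Require Import structures.
From mathcomp Require Import all_boot all_order all_algebra.
From mathcomp Require Import all_classical all_reals all_analysis.
From mathcomp Require Import ring lra.
From mathcomp Require Import measurable_realfun.
Import Order.TTheory GRing.Theory Num.Theory.
Local Open Scope classical_set_scope.
Local Open Scope ring_scope.
Section Core.
Context {R : realType} {I : finType} {d : measure_display} {T : measurableType d}.
Variable (P : probability T R).
Variables (X : T -> bool) (N : T -> I).
Hypotheses (mX : forall x, measurable (evX X x)) (mN : forall n, measurable (evN N n)).

Definition cell n x : set T := evX X x `&` evN N n.
Definition cE (Z : T -> R) n x : R := Ex P (fun w => Z w * \1_(cell n x) w).

Lemma mcell n x : measurable (cell n x).
Proof. exact: measurableI. Qed.

Lemma cellE w n x : \1_(cell n x) w = ((X w == x) && (N w == n))%:R :> R.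
Proof.
rewrite indicE; have -> // : (w \in cell n x) = ((X w == x) && (N w == n)).
apply/idP/idP.
- by rewrite inE => -[/= -> ->]; rewrite !eqxx.
- by move=> /andP[/eqP ? /eqP ?]; rewrite inE; split.
Qed.

Lemma ptwise (h : I -> bool -> R) (Z : T -> R) w :
  h (N w) (X w) * Z w =
  \sum_(n : I) (h n true * (Z w * \1_(cell n true) w) +
                h n false * (Z w * \1_(cell n false) w)).
Proof.
rewrite (bigD1 (N w)) //= big1 ?addr0; last first.
  by move=> n /negbTE nN; rewrite !cellE [N w == n]eq_sym nN !andbF !mulr0 addr0.
rewrite !cellE !eqxx !andbT.
by case: (X w) => /=; rewrite ?mulr1 ?mulr0 ?addr0 ?add0r.
Qed.

Lemma int_cell (Z : T -> R) n x : P.-integrable setT (EFin \o Z) ->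
  P.-integrable setT (EFin \o (fun w => Z w * \1_(cell n x) w)).
Proof.
move=> iZ.
have H := integrableMl measurableT iZ (@measurable_realfun.measurable_indic _ _ R setT _ (mcell n x)).
apply: eq_integrable (H _) => //.
exists 1; split => // y y1 z _ /=; rewrite indicE.
by case: (z \in cell n x) => /=; rewrite ?normr0 ?normr1; lra.
Qed.

Lemma EhZ (Z : T -> R) (h : I -> bool -> R) : P.-integrable setT (EFin \o Z) ->
  Ex P (fun w => h (N w) (X w) * Z w) =
  \sum_(n : I) (h n true * cE Z n true + h n false * cE Z n false).
Proof.
move=> iZ.
rewrite {1}/Ex unlock.
under eq_integral => w _ do rewrite ptwise -sumEFin.
rewrite integral_sum //; last first.
  move=> n; under eq_fun => w do rewrite EFinD (EFinM (h n true)) (EFinM (h n false)).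
  by apply: integrableD => //; apply: integrableZl => //; exact: int_cell.
transitivity (fine (\sum_n (h n true * cE Z n true + h n false * cE Z n false)%:E)%E); last by rewrite sumEFin.
congr fine; apply: eq_bigr => n _.
under eq_integral => x _ do rewrite EFinD (EFinM (h n true)) (EFinM (h n false)).
rewrite integralD //; try (apply: integrableZl => //; exact: int_cell).
rewrite !integralZl //; try exact: int_cell.
rewrite /cE /Ex unlock.
rewrite EFinD !EFinM !fineK //; apply: integrable_fin_num => //; exact: int_cell.
Qed.


Definition q n x : R := Pr P (cell n x).

Lemma int1 : P.-integrable setT (EFin \o (fun _ : T => (1:R))).
Proof. exact: finite_measure_integrable_cst. Qed.

Lemma cE1 n x : cE (fun _ => 1) n x = q n x.
Proof.
rewrite /cE /q /Pr /Ex; congr fine.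
under eq_fun => w do rewrite mul1r.
by rewrite expectation_indic //; exact: mcell.
Qed.

Lemma Eh (h : I -> bool -> R) :
  Ex P (fun w => h (N w) (X w)) =
  \sum_(n : I) (h n true * q n true + h n false * q n false).
Proof.
rewrite (_ : (fun w => h (N w) (X w)) = (fun w => h (N w) (X w) * 1)); last first.
  by apply: funext => w; rewrite mulr1.
by rewrite EhZ; [under eq_bigr => n _ do rewrite !cE1|exact: int1].
Qed.

Lemma q_ge0 n x : 0 <= q n x.
Proof. by rewrite /q /Pr fine_ge0. Qed.

Lemma cE0 (Z : T -> R) n x : measurable_fun setT Z -> q n x = 0 -> cE Z n x = 0.
Proof.
move=> mZ q0.
have P0 : P (cell n x) = 0%E.
  apply/eqP; rewrite -fine_eq0; first by apply/eqP.
  exact: fin_num_measure (mcell n x).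
rewrite /cE /Ex unlock (ae_eq_integral (cst 0%E)) ?integral0 //.
- apply/measurable_EFinP; apply: measurable_funM => //.
  exact: (@measurable_realfun.measurable_indic _ _ R setT _ (mcell n x)).
- exists (cell n x); split => //; first exact: mcell.
  move=> w /= H; apply: contrapT => Hw; apply: H => _.
  by rewrite indicE memNset // mulr0.
Qed.


Lemma indN w n : \1_(evN N n) w = (N w == n)%:R :> R.
Proof.
rewrite indicE; have -> // : (w \in evN N n) = (N w == n).
apply/idP/idP; first by rewrite inE => /= ->.
by move=> /eqP ?; rewrite inE.
Qed.

Lemma indX w x : \1_(evX X x) w = (X w == x)%:R :> R.
Proof.
rewrite indicE; have -> // : (w \in evX X x) = (X w == x).
apply/idP/idP; first by rewrite inE => /= ->.
by move=> /eqP ?; rewrite inE.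
Qed.

Lemma sum_delta (F : I -> R) n : \sum_m ((m == n)%:R * F m) = F n.
Proof.
rewrite (bigD1 n) //= big1 ?eqxx ?mul1r ?addr0 // => m /negbTE ->.
by rewrite mul0r.
Qed.

Lemma Eh_n (g : bool -> R) n :
  Ex P (fun w => (N w == n)%:R * g (X w)) = g true * q n true + g false * q n false.
Proof.
rewrite (Eh (fun m x => (m == n)%:R * g x)) -(sum_delta (fun m => g true * q m true + g false * q m false) n).
by apply: eq_bigr => m _; ring.
Qed.

Lemma Eh_x (g : I -> R) x :
  Ex P (fun w => (X w == x)%:R * g (N w)) = \sum_n g n * q n x.
Proof.
rewrite (Eh (fun m x' => (x' == x)%:R * g m)).
by apply: eq_bigr => m _; case: x => /=; ring.
Qed.

Section WithZ.
Variable Z : T -> R.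
Hypothesis iZ : P.-integrable setT (EFin \o Z).

Lemma EZ_n (g : bool -> R) n :
  Ex P (fun w => (N w == n)%:R * g (X w) * Z w) = g true * cE Z n true + g false * cE Z n false.
Proof.
rewrite (EhZ Z (fun m x => (m == n)%:R * g x)) // -(sum_delta (fun m => g true * cE Z m true + g false * cE Z m false) n).
by apply: eq_bigr => m _; ring.
Qed.

Lemma EZ_x (g : I -> R) x :
  Ex P (fun w => (X w == x)%:R * g (N w) * Z w) = \sum_n g n * cE Z n x.
Proof.
rewrite (EhZ Z (fun m x' => (x' == x)%:R * g m)) //.
by apply: eq_bigr => m _; case: x => /=; ring.
Qed.
End WithZ.


Lemma PrE A : measurable A -> Pr P A = Ex P (\1_A).
Proof. by move=> mA; rewrite /Pr /Ex expectation_indic. Qed.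

Lemma ExE (f : T -> R) (h : I -> bool -> R) : (forall w, f w = h (N w) (X w)) ->
  Ex P f = \sum_(n : I) (h n true * q n true + h n false * q n false).
Proof. by move=> fh; rewrite -Eh; congr Ex; apply: funext. Qed.

Lemma p_E n : p_ P N n = q n true + q n false.
Proof.
rewrite /p_ PrE // (_ : \1_ _ = fun w => (N w == n)%:R * (fun _ => 1) (X w)).
  by rewrite (Eh_n (fun _ => 1)) !mul1r.
by apply: funext => w; rewrite indN mulr1.
Qed.

Lemma X_E n : X_ P X N n = q n true / (q n true + q n false).
Proof.
rewrite /X_ /condE -p_E /p_; congr (_ / _).
rewrite (_ : (fun w => _) = fun w => (N w == n)%:R * (fun x : bool => (x%:R : R)) (X w)).
  by rewrite (Eh_n (fun x => x%:R)) /= mul1r mul0r addr0.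
by apply: funext => w; rewrite indN mulrC.
Qed.

Lemma ExXr : Ex P (Xr X) = \sum_n q n true.
Proof.
rewrite (@ExE _ (fun _ x => x%:R)) //.
by apply: eq_bigr => n _ /=; rewrite mul1r mul0r addr0.
Qed.

Lemma PrX x : Pr P (evX X x) = \sum_n q n x.
Proof.
rewrite PrE // (_ : \1_ _ = fun w => (X w == x)%:R * (fun _ => 1) (N w)).
  by rewrite (Eh_x (fun _ => 1)); apply: eq_bigr => n _; rewrite mul1r.
by apply: funext => w; rewrite indX mulr1.
Qed.

Lemma ExF (f : I -> R) : Ex P (fun w => f (N w)) = \sum_n f n * (q n true + q n false).
Proof. by rewrite (@ExE _ (fun n _ => f n)) //; apply: eq_bigr => n _; ring. Qed.

Lemma EXNX x : Ex P (fun w => XN P X N w * \1_(evX X x) w) = \sum_n X_ P X N n * q n x.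
Proof.
rewrite (_ : (fun w => _) = fun w => (X w == x)%:R * X_ P X N (N w)).
  by rewrite (Eh_x (X_ P X N)).
by apply: funext => w; rewrite indX mulrC.
Qed.

Lemma CovE (F G : T -> R) (f g : I -> bool -> R) :
  (forall w, F w = f (N w) (X w)) -> (forall w, G w = g (N w) (X w)) ->
  Cov P F G = \sum_n ((f n true - Ex P F) * (g n true - Ex P G) * q n true
                     + (f n false - Ex P F) * (g n false - Ex P G) * q n false).
Proof.
move=> hF hG; rewrite /Cov covariance.unlock.
transitivity (Ex P (fun w => (F w - Ex P F) * (G w - Ex P G))); first by [].
apply: (@ExE _ (fun n x => (f n x - Ex P F) * (g n x - Ex P G))) => w /=.
by rewrite hF hG.
Qed.

Section WithY.
Variable Y : T -> R.
Hypothesis iY : P.-integrable setT (EFin \o Y).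

Lemma Y_E n : Y_ P Y N n = (cE Y n true + cE Y n false) / (q n true + q n false).
Proof.
rewrite /Y_ /condE -p_E /p_; congr (_ / _).
rewrite (_ : (fun w => _) = fun w => (N w == n)%:R * (fun _ => 1) (X w) * Y w).
  by rewrite (@EZ_n Y iY (fun _ => 1)) !mul1r.
by apply: funext => w; rewrite indN mulr1 mulrC.
Qed.

Lemma ExY : Ex P Y = \sum_n (cE Y n true + cE Y n false).
Proof.
transitivity (Ex P (fun w => (fun _ _ => 1) (N w) (X w) * Y w)).
  by congr Ex; apply: funext => w; rewrite mul1r.
by rewrite (EhZ Y (fun _ _ => 1)) //; apply: eq_bigr => n _; rewrite !mul1r.
Qed.

Lemma EYX x : Ex P (fun w => Y w * \1_(evX X x) w) = \sum_n cE Y n x.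
Proof.
rewrite (_ : (fun w => _) = fun w => (X w == x)%:R * (fun _ => 1) (N w) * Y w).
  by rewrite (@EZ_x Y iY (fun _ => 1)); apply: eq_bigr => n _; rewrite mul1r.
by apply: funext => w; rewrite indX mulr1 mulrC.
Qed.

Lemma EYXN x : Ex P (fun w => Y w * XN P X N w * \1_(evX X x) w) = \sum_n X_ P X N n * cE Y n x.
Proof.
rewrite (_ : (fun w => _) = fun w => (X w == x)%:R * X_ P X N (N w) * Y w).
  by rewrite (@EZ_x Y iY (X_ P X N)).
by apply: funext => w; rewrite indX /XN; ring.
Qed.

Lemma deltaWE : deltaW P X Y N =
  condCov P (evX X true) Y (XN P X N) * \sum_n q n true +
  condCov P (evX X false) Y (XN P X N) * \sum_n q n false.
Proof.
rewrite /deltaW (@ExE _ (fun _ x => condCov P (evX X x) Y (XN P X N))) //.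
by rewrite big_split /= !mulr_sumr.
Qed.

End WithY.

End Core.
Section Alg.
Context {R : realType} {I : finType}.
Variables (q1 q0 s1 s0 : I -> R) (Ylow Yhigh : R).

Definition pp n := q1 n + q0 n.
Definition xx n := q1 n / pp n.
Definition yy n := (s1 n + s0 n) / pp n.
Definition pi := \sum_n q1 n.
Definition Q0 := \sum_n q0 n.
Definition S1 := \sum_n s1 n.
Definition S0 := \sum_n s0 n.
Definition A1 := \sum_n xx n * q1 n.
Definition A0 := \sum_n xx n * q0 n.
Definition B1 := \sum_n xx n * s1 n.
Definition B0 := \sum_n xx n * s0 n.

Hypotheses (hq1 : forall n, 0 <= q1 n) (hq0 : forall n, 0 <= q0 n)
 (hb1 : forall n, Ylow * q1 n <= s1 n <= Yhigh * q1 n)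
 (hb0 : forall n, Ylow * q0 n <= s0 n <= Yhigh * q0 n)
 (hsum : \sum_n (q1 n + q0 n) = 1).

Lemma pz n : pp n = 0 -> [/\ q1 n = 0, q0 n = 0, s1 n = 0 & s0 n = 0].
Proof.
rewrite /pp => h.
have e1 : q1 n = 0 by have := hq1 n; have := hq0 n; lra.
have e0 : q0 n = 0 by have := hq1 n; have := hq0 n; lra.
have := hb1 n; have := hb0 n; rewrite e1 e0 !mulr0 => /andP[? ?] /andP[? ?].
split => //; lra.
Qed.

Lemma xp n : xx n * pp n = q1 n.
Proof.
have [h0|h] := eqVneq (pp n) 0; first by case: (pz n h0) => e1 _ _ _; rewrite h0 mulr0 e1.
by rewrite /xx divfK.
Qed.

Lemma yp n : yy n * pp n = s1 n + s0 n.
Proof.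
have [h0|h] := eqVneq (pp n) 0; first by case: (pz n h0) => _ _ e1 e0; rewrite h0 mulr0 e1 e0 addr0.
by rewrite /yy divfK.
Qed.

Lemma xxp n : xx n * xx n * pp n = xx n * q1 n.
Proof. by rewrite -mulrA xp. Qed.

Lemma xyp n : yy n * xx n * pp n = xx n * (s1 n + s0 n).
Proof. by rewrite -yp; ring. Qed.

Lemma piQ : pi + Q0 = 1.
Proof. by rewrite /pi /Q0 -big_split. Qed.

Lemma EXN : \sum_n xx n * pp n = pi.
Proof. by apply: eq_bigr => n _; rewrite xp. Qed.

Lemma EYN : \sum_n yy n * pp n = S1 + S0.
Proof. by rewrite /S1 /S0 -big_split; apply: eq_bigr => n _; rewrite yp. Qed.

Lemma A0E : A0 = pi - A1.
Proof.
rewrite /A0 /pi /A1 -sumrB; apply: eq_bigr => n _.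
have := xp n; rewrite /pp => h; lra.
Qed.

Lemma VXNE : \sum_n ((xx n - pi) * (xx n - pi) * q1 n + (xx n - pi) * (xx n - pi) * q0 n)
   = A1 - pi ^+ 2.
Proof.
transitivity (\sum_n (xx n * q1 n - (2 * pi) * q1 n + pi ^+ 2 * (q1 n + q0 n))).
  apply: eq_bigr => n _.
  transitivity (xx n * xx n * pp n - 2 * pi * (xx n * pp n) + pi^+2 * pp n).
    by rewrite /pp; ring.
  by rewrite xxp xp.
rewrite big_split /= sumrB -!mulr_sumr hsum -/pi -/A1.
ring.
Qed.


Lemma CYXE : \sum_n ((yy n - (S1 + S0)) * (xx n - pi) * q1 n + (yy n - (S1 + S0)) * (xx n - pi) * q0 n)
   = (B1 + B0) - (S1 + S0) * pi.
Proof.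
transitivity (\sum_n (xx n * s1 n + xx n * s0 n - pi * (s1 n + s0 n) - (S1 + S0) * q1 n
                    + ((S1 + S0) * pi) * (q1 n + q0 n))).
  apply: eq_bigr => n _.
  transitivity (yy n * xx n * pp n - pi * (yy n * pp n) - (S1 + S0) * (xx n * pp n)
                + (S1 + S0) * pi * pp n).
    by rewrite /pp; ring.
  by rewrite xyp yp xp /pp; ring.
rewrite !big_split /= !sumrN -!mulr_sumr !big_split /= -/pi -/Q0 -/S1 -/S0 -/B1 -/B0.
have -> : Q0 = 1 - pi by have := piQ; lra.
ring.
Qed.

Lemma VXrE : \sum_n ((1 - pi) * (1 - pi) * q1 n + (0 - pi) * (0 - pi) * q0 n) = pi * Q0.
Proof.
rewrite big_split /= -!mulr_sumr -/pi -/Q0.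
have := piQ => h.
have -> : Q0 = 1 - pi by lra.
ring.
Qed.

Definition Dp := S1 / pi - S0 / Q0.
Definition delta := (B1 / pi - (S1 / pi) * (A1 / pi)) * pi + (B0 / Q0 - (S0 / Q0) * (A0 / Q0)) * Q0.

Lemma key : 0 < pi -> 0 < Q0 -> ((B1 + B0) - (S1 + S0) * pi) - delta = Dp * (A1 - pi ^+ 2).
Proof.
move=> h1 h0; rewrite /delta /Dp A0E.
have e : Q0 = 1 - pi by have := piQ; lra.
rewrite e; field.
by apply/andP; split; rewrite lt0r_neq0 //; lra.
Qed.

Lemma DpE : 0 < pi -> 0 < Q0 -> Dp = (S1 - pi * (S1 + S0)) / (pi * Q0).
Proof.
move=> h1 h0; rewrite /Dp.
have e : Q0 = 1 - pi by have := piQ; lra.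
rewrite e; field.
by apply/andP; split; rewrite lt0r_neq0 //; lra.
Qed.

Definition Mp := \sum_n Num.min (yy n - Ylow * (1 - xx n)) (Yhigh * xx n) * pp n.
Definition Mm := \sum_n Num.min (yy n - Ylow * xx n) (Yhigh * (1 - xx n)) * pp n.

Lemma pp_ge0 n : 0 <= pp n.
Proof. by rewrite /pp addr_ge0. Qed.

Lemma MpE : Mp = \sum_n Num.min (Yhigh * q1 n) (s1 n + s0 n - Ylow * q0 n).
Proof.
apply: eq_bigr => n _; rewrite minr_pMl ?pp_ge0 // minC.
congr Num.min.
  by rewrite -mulrA xp.
transitivity (yy n * pp n - Ylow * (pp n - xx n * pp n)); first by ring.
by rewrite yp xp /pp; ring.
Qed.

Lemma MmE : Mm = \sum_n Num.min (s1 n + s0 n - Ylow * q1 n) (Yhigh * q0 n).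
Proof.
apply: eq_bigr => n _; rewrite minr_pMl ?pp_ge0 //.
congr Num.min.
  transitivity (yy n * pp n - Ylow * (xx n * pp n)); first by ring.
  by rewrite yp xp.
transitivity (Yhigh * (pp n - xx n * pp n)); first by ring.
by rewrite xp /pp; ring.
Qed.

Lemma S1_Mp : S1 <= Mp.
Proof.
rewrite MpE; apply: ler_sum => n _; rewrite le_min.
have := hb1 n; have := hb0 n => /andP[? ?] /andP[? ?].
by apply/andP; split; lra.
Qed.

Lemma S0_Mm : S0 <= Mm.
Proof.
rewrite MmE; apply: ler_sum => n _; rewrite le_min.
have := hb1 n; have := hb0 n => /andP[? ?] /andP[? ?].
by apply/andP; split; lra.
Qed.


Lemma maxc (a b : R) : (Num.max a b = b /\ a <= b) \/ (Num.max a b = a /\ b <= a).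
Proof.
rewrite maxEle; case: ifPn => h; [left|right]; split => //.
by move: h; rewrite -ltNge => /ltW.
Qed.

Lemma minc (a b : R) : (Num.min a b = a /\ a <= b) \/ (Num.min a b = b /\ b <= a).
Proof.
rewrite minEle; case: ifPn => h; [left|right]; split => //.
by move: h; rewrite -ltNge => /ltW.
Qed.

Definition Lo n := Num.max (Ylow * q1 n) (s1 n + s0 n - Yhigh * q0 n).
Definition Up n := Num.min (Yhigh * q1 n) (s1 n + s0 n - Ylow * q0 n).

Lemma LoUp n : [/\ Lo n <= Up n, Ylow * q1 n <= Lo n, s1 n + s0 n - Yhigh * q0 n <= Lo n,
   Up n <= Yhigh * q1 n & Up n <= s1 n + s0 n - Ylow * q0 n].
Proof.
have := hb1 n; have := hb0 n => /andP[? ?] /andP[? ?].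
rewrite /Lo /Up.
case: (maxc (Ylow * q1 n) (s1 n + s0 n - Yhigh * q0 n)) => [[-> ?]|[-> ?]];
case: (minc (Yhigh * q1 n) (s1 n + s0 n - Ylow * q0 n)) => [[-> ?]|[-> ?]]; split; lra.
Qed.

Lemma MmE' : (S1 + S0) - Mm = \sum_n Lo n.
Proof.
rewrite MmE /S1 /S0 -big_split -sumrB; apply: eq_bigr => n _ /=.
rewrite /Lo.
case: (maxc (Ylow * q1 n) (s1 n + s0 n - Yhigh * q0 n)) => [[-> ?]|[-> ?]];
case: (minc (s1 n + s0 n - Ylow * q1 n) (Yhigh * q0 n)) => [[-> ?]|[-> ?]]; lra.
Qed.

Lemma MpE' : Mp = \sum_n Up n.
Proof. by rewrite MpE. Qed.

Lemma sharp Tt : (S1 + S0) - Mm <= Tt -> Tt <= Mp ->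
  exists s1' s0' : I -> R,
  [/\ (forall n, Ylow * q1 n <= s1' n <= Yhigh * q1 n),
      (forall n, Ylow * q0 n <= s0' n <= Yhigh * q0 n),
      (forall n, s1' n + s0' n = s1 n + s0 n) &
      \sum_n s1' n = Tt].
Proof.
rewrite MmE' MpE' => hL hU.
set SL := \sum_n Lo n in hL; set SU := \sum_n Up n in hU.
have hLU : SL <= SU by apply: ler_sum => n _; case: (LoUp n).
pose th := if SU - SL == 0 then 0 else (Tt - SL) / (SU - SL).
have [th0 th1 thE] : [/\ 0 <= th, th <= 1 & th * (SU - SL) = Tt - SL].
  rewrite /th; case: eqP => h.
    by split => //; lra.
  have hp : 0 < SU - SL by rewrite lt_neqAle eq_sym; apply/andP; split; [apply/eqP|lra].
  split.
  - by apply: divr_ge0; lra.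
  - by rewrite ler_pdivrMr // mul1r; lra.
  - by rewrite divfK //; apply/eqP.
pose f1 n := Lo n + th * (Up n - Lo n).
exists f1, (fun n => s1 n + s0 n - f1 n); split.
- move=> n; case: (LoUp n) => h1 h2 h3 h4 h5.
  have a1 : 0 <= th * (Up n - Lo n) by apply: mulr_ge0; lra.
  have a2 : 0 <= (1 - th) * (Up n - Lo n) by apply: mulr_ge0; lra.
  rewrite /f1; apply/andP; split; lra.
- move=> n; case: (LoUp n) => h1 h2 h3 h4 h5.
  have a1 : 0 <= th * (Up n - Lo n) by apply: mulr_ge0; lra.
  have a2 : 0 <= (1 - th) * (Up n - Lo n) by apply: mulr_ge0; lra.
  rewrite /f1; apply/andP; split; lra.
- by move=> n; ring.
- rewrite /f1 big_split /= -mulr_sumr sumrB -/SL -/SU thE; ring.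
Qed.

End Alg.
Section Core2.
Context {R : realType} {I : finType} {d : measure_display} {T : measurableType d}.
Variable (P : probability T R).
Variables (X : T -> bool) (N : T -> I).
Hypotheses (mX : forall x, measurable (evX X x)) (mN : forall n, measurable (evN N n)).

Lemma int_h (h : I -> bool -> R) : P.-integrable setT (EFin \o (fun w => h (N w) (X w))).
Proof.
apply: (@eq_integrable _ _ _ _ _ measurableT (fun w => (\sum_(n : I) (h n true * (1 * \1_(cell X N n true) w) +
                h n false * (1 * \1_(cell X N n false) w)))%:E)) => //.
  by move=> w _ /=; rewrite -ptwise mulr1.
under eq_fun => w do rewrite -sumEFin.
apply: (integrable_sum measurableT) => n _.
under eq_fun => w do rewrite EFinD (EFinM (h n true)) (EFinM (h n false)).
apply: integrableD => //; apply: integrableZl => //; apply: int_cell => //; exact: int1.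
Qed.

Lemma meas_h (h : I -> bool -> R) : measurable_fun setT (fun w => h (N w) (X w)).
Proof.
have := int_h h => /integrableP[+ _].
by move/measurable_EFinP.
Qed.

Lemma cE_h (h : I -> bool -> R) n x : cE P X N (fun w => h (N w) (X w)) n x = h n x * q P X N n x.
Proof.
rewrite /cE (@ExE _ _ _ _ P X N mX mN _ (fun m x' => h m x' * ((x' == x) && (m == n))%:R)); last first.
  by move=> w; rewrite cellE.
rewrite -(sum_delta (fun m => h m x * q P X N m x) n).
by apply: eq_bigr => m _; case: x; case: (m == n) => /=; ring.
Qed.

End Core2.
Section Trans.
Context {R : realType} {I : finType} {d : measure_display} {T : measurableType d}.
Variable (P : probability T R).
Variables (X : T -> bool) (N : T -> I) (Y : T -> R).
Hypotheses (mX : forall x, measurable (evX X x)) (mN : forall n, measurable (evN N n))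
  (iY : P.-integrable setT (EFin \o Y)).

Notation Q1 := (fun n => q P X N n true).
Notation Q0f := (fun n => q P X N n false).
Notation T1 := (fun n => cE P X N Y n true).
Notation T0 := (fun n => cE P X N Y n false).

Lemma T_Dpar : Dpar P X Y = Dp Q1 Q0f T1 T0.
Proof. by rewrite /Dpar /condE !(EYX P X N mX mN Y iY) !(PrX P X N mX mN). Qed.

Lemma T_delta : deltaW P X Y N = delta Q1 Q0f T1 T0.
Proof.
rewrite deltaWE // /condCov /condE !EYXN // !(EYX P X N mX mN Y iY) !EXNX // !(PrX P X N mX mN).
have XE : X_ P X N = xx Q1 Q0f by apply: funext => n; rewrite X_E.
by rewrite XE.
Qed.


Lemma XE : X_ P X N = xx Q1 Q0f.
Proof. by apply: funext => n; rewrite X_E. Qed.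

Lemma YE : Y_ P Y N = yy Q1 Q0f T1 T0.
Proof. by apply: funext => n; rewrite (Y_E P X N mX mN Y iY). Qed.

Variables (Ylow Yhigh : R).
Hypotheses (hq1 : forall n, 0 <= Q1 n) (hq0 : forall n, 0 <= Q0f n)
 (hb1 : forall n, Ylow * Q1 n <= T1 n <= Yhigh * Q1 n)
 (hb0 : forall n, Ylow * Q0f n <= T0 n <= Yhigh * Q0f n)
 (hsum : \sum_n (Q1 n + Q0f n) = 1).

Lemma T_EXN : Ex P (XN P X N) = pi Q1.
Proof.
rewrite (ExF P X N mX mN (X_ P X N)) XE.
exact: (EXN _ _ _ _ Ylow Yhigh hq1 hq0 hb1 hb0).
Qed.

Lemma T_VXN : Var P (XN P X N) = A1 Q1 Q0f - pi Q1 ^+ 2.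
Proof.
have -> : Var P (XN P X N) = Cov P (XN P X N) (XN P X N) by [].
rewrite (CovE P X N mX mN (XN P X N) (XN P X N) (fun n _ => X_ P X N n) (fun n _ => X_ P X N n)) //.
rewrite T_EXN XE.
exact: (VXNE _ _ _ _ Ylow Yhigh hq1 hq0 hb1 hb0 hsum).
Qed.


Lemma T_EYN : Ex P (YN P Y N) = S1 T1 + S0 T0.
Proof.
rewrite (ExF P X N mX mN (Y_ P Y N)) YE.
exact: (EYN _ _ _ _ Ylow Yhigh hq1 hq0 hb1 hb0).
Qed.

Lemma T_CYX : Cov P (YN P Y N) (XN P X N) = (B1 Q1 Q0f T1 + B0 Q1 Q0f T0) - (S1 T1 + S0 T0) * pi Q1.
Proof.
rewrite (CovE P X N mX mN (YN P Y N) (XN P X N) (fun n _ => Y_ P Y N n) (fun n _ => X_ P X N n)) //.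
rewrite T_EYN T_EXN XE YE.
exact: (CYXE _ _ _ _ Ylow Yhigh hq1 hq0 hb1 hb0 hsum).
Qed.

Lemma T_D_ER : D_ER P X Y N = ((B1 Q1 Q0f T1 + B0 Q1 Q0f T0) - (S1 T1 + S0 T0) * pi Q1) / (A1 Q1 Q0f - pi Q1 ^+ 2).
Proof. by rewrite /D_ER T_CYX T_VXN. Qed.

Lemma T_ExXr : Ex P (Xr X) = pi Q1.
Proof. exact: ExXr. Qed.

Lemma T_ExY : Ex P Y = S1 T1 + S0 T0.
Proof. by rewrite (ExY P X N mX mN Y iY) big_split. Qed.

Lemma T_VXr : Var P (Xr X) = pi Q1 * Q0 Q0f.
Proof.
have -> : Var P (Xr X) = Cov P (Xr X) (Xr X) by [].
rewrite (CovE P X N mX mN (Xr X) (Xr X) (fun _ x => x%:R) (fun _ x => x%:R)) //.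
rewrite T_ExXr /=.
exact: (VXrE _ _ hsum).
Qed.

Lemma T_Dplus : D_MOB_plus P X Y N Ylow Yhigh =
  (Mp Q1 Q0f T1 T0 Ylow Yhigh - pi Q1 * (S1 T1 + S0 T0)) / (pi Q1 * Q0 Q0f).
Proof.
rewrite /D_MOB_plus (ExF P X N mX mN (fun n => Num.min (Y_ P Y N n - Ylow * (1 - X_ P X N n)) (Yhigh * X_ P X N n))).
by rewrite XE YE T_ExXr T_ExY T_VXr.
Qed.

Lemma T_Dminus : D_MOB_minus P X Y N Ylow Yhigh =
  ((S1 T1 + S0 T0) * (1 - pi Q1) - Mm Q1 Q0f T1 T0 Ylow Yhigh) / (pi Q1 * Q0 Q0f).
Proof.
rewrite /D_MOB_minus (ExF P X N mX mN (fun n => Num.min (Y_ P Y N n - Ylow * X_ P X N n) (Yhigh * (1 - X_ P X N n)))).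
by rewrite XE YE T_ExXr T_ExY T_VXr.
Qed.

End Trans.

Lemma BB {R : realType} {I : finType} (q1 q0 s1 s0 s1' s0' : I -> R) :
  (forall n, s1' n + s0' n = s1 n + s0 n) ->
  B1 q1 q0 s1' + B0 q1 q0 s0' = B1 q1 q0 s1 + B0 q1 q0 s0 /\
  S1 s1' + S0 s0' = S1 s1 + S0 s0.
Proof.
move=> hs; split.
  rewrite /B1 /B0 -!big_split; apply: eq_bigr => n _ /=.
  by rewrite -!mulrDr hs.
by rewrite /S1 /S0 -!big_split; apply: eq_bigr => n _ /=; rewrite hs.
Qed.

Theorem proposition5 (R : realType) (I : finType) (d : measure_display)
  (T : measurableType d) (P : probability T R)
  (X : T -> bool) (Y : T -> R) (N : T -> I) (Ylow Yhigh : R) :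
  standing P X Y N Ylow Yhigh ->
  0 < Var P (XN P X N) ->
  [/\
    (* (i) *)
    (0 <= deltaW P X Y N ->
       D_MOB_minus P X Y N Ylow Yhigh <= Dpar P X Y
       <= Num.min (D_MOB_plus P X Y N Ylow Yhigh) (D_ER P X Y N)),
    (* (ii) *)
    (deltaW P X Y N <= 0 ->
       Num.max (D_MOB_minus P X Y N Ylow Yhigh) (D_ER P X Y N) <= Dpar P X Y
       <= D_MOB_plus P X Y N Ylow Yhigh),
    (* (iii) sharpness of (i) *)
    (forall D0 : R,
       D_MOB_minus P X Y N Ylow Yhigh <= D0
       <= Num.min (D_MOB_plus P X Y N Ylow Yhigh) (D_ER P X Y N) ->
       exists (d' : measure_display) (T' : measurableType d')
              (P' : probability T' R) (X' : T' -> bool) (Y' : T' -> R)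
              (N' : T' -> I),
         [/\ standing P' X' Y' N' Ylow Yhigh,
             (forall n, [/\ p_ P' N' n = p_ P N n,
                            X_ P' X' N' n = X_ P X N n &
                            Y_ P' Y' N' n = Y_ P Y N n]),
             0 <= deltaW P' X' Y' N' &
             Dpar P' X' Y' = D0]) &
    (* (iii) sharpness of (ii) *)
    (forall D0 : R,
       Num.max (D_MOB_minus P X Y N Ylow Yhigh) (D_ER P X Y N) <= D0
       <= D_MOB_plus P X Y N Ylow Yhigh ->
       exists (d' : measure_display) (T' : measurableType d')
              (P' : probability T' R) (X' : T' -> bool) (Y' : T' -> R)
              (N' : T' -> I),
         [/\ standing P' X' Y' N' Ylow Yhigh,
             (forall n, [/\ p_ P' N' n = p_ P N n,
                            X_ P' X' N' n = X_ P X N n &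
                            Y_ P' Y' N' n = Y_ P Y N n]),
             deltaW P' X' Y' N' <= 0 &
             Dpar P' X' Y' = D0])].
Proof.
move=> [mX mN mY iY [[n0 [hp0 hx0]] hYY hcell]] hV.
have hq1 : forall n, 0 <= ((q P X N)^~ true) n by move=> n; exact: q_ge0.
have hq0 : forall n, 0 <= ((q P X N)^~ false) n by move=> n; exact: q_ge0.
have hb : forall n x, Ylow * q P X N n x <= cE P X N Y n x <= Yhigh * q P X N n x.
  move=> n x; have [q0|qp] := eqVneq (q P X N n x) 0.
    by rewrite q0 (cE0 P X N mX mN Y n x mY q0) !mulr0 lexx.
  have qpos : 0 < q P X N n x by rewrite lt_neqAle eq_sym qp q_ge0.
  have H : Ylow <= cE P X N Y n x / q P X N n x <= Yhigh := hcell x n qpos.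
  by move: H; rewrite ler_pdivlMr // ler_pdivrMr.
have hb1 : forall n, Ylow * ((q P X N)^~ true) n <= ((cE P X N Y)^~ true) n
   <= Yhigh * ((q P X N)^~ true) n by move=> n; exact: hb.
have hb0 : forall n, Ylow * ((q P X N)^~ false) n <= ((cE P X N Y)^~ false) n
   <= Yhigh * ((q P X N)^~ false) n by move=> n; exact: hb.
have hsum : \sum_n (((q P X N)^~ true) n + ((q P X N)^~ false) n) = 1.
  have e1 : Ex P (fun _ : T => 1) = 1.
    by rewrite /Ex (_ : (fun _ => 1) = cst 1) // expectation_cst.
  have := ExF P X N mX mN (fun _ => 1); rewrite e1 => ->.
  by apply: eq_bigr => n _; rewrite mul1r.
have [hn1 hn0] : 0 < q P X N n0 true /\ 0 < q P X N n0 false.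
  move: hp0 hx0; rewrite (p_E P X N mX mN) (X_E P X N mX mN) => hp /andP[hx1 hx2].
  have e : q P X N n0 true = (q P X N n0 true / (q P X N n0 true + q P X N n0 false))
      * (q P X N n0 true + q P X N n0 false) by rewrite divfK // gt_eqF.
  have a1 : 0 < q P X N n0 true by rewrite e mulr_gt0.
  split => //.
  by move: hx2; rewrite ltr_pdivrMr // mul1r => h; lra.
have hpi : 0 < pi ((q P X N)^~ true).
  rewrite /pi (bigD1 n0) //=.
  have : 0 <= \sum_(i | i != n0) q P X N i true by apply: sumr_ge0 => i _; exact: q_ge0.
  lra.
have hQ0 : 0 < Q0 ((q P X N)^~ false).
  rewrite /Q0 (bigD1 n0) //=.
  have : 0 <= \sum_(i | i != n0) q P X N i false by apply: sumr_ge0 => i _; exact: q_ge0.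
  lra.
have hpQ := piQ _ _ hsum.
have hkey := key _ _ _ _ _ _ hq1 hq0 hb1 hb0 hsum hpi hQ0.
have hDp := DpE _ _ ((cE P X N Y)^~ true) ((cE P X N Y)^~ false) hsum hpi hQ0.
have hMp := S1_Mp _ _ _ _ _ _ hq1 hq0 hb1 hb0.
have hMm := S0_Mm _ _ _ _ _ _ hq1 hq0 hb1 hb0.
move: hV.
rewrite (T_VXN P X N Y mX mN Ylow Yhigh) // => hV.
rewrite (T_Dpar P X N) // T_delta // (T_D_ER P X N Y mX mN iY Ylow Yhigh) // T_Dplus // T_Dminus //.
set PI := pi ((q P X N)^~ true) in hkey hDp hMp hMm hpi hQ0 hpQ hV *.
set QQ := Q0 ((q P X N)^~ false) in hkey hDp hMp hMm hpi hQ0 hpQ hV *.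
set s1 := S1 ((cE P X N Y)^~ true) in hkey hDp hMp hMm hpi hQ0 hpQ hV *.
set s0 := S0 ((cE P X N Y)^~ false) in hkey hDp hMp hMm hpi hQ0 hpQ hV *.
set Bs := B1 ((q P X N)^~ true) ((q P X N)^~ false) ((cE P X N Y)^~ true) +
          B0 ((q P X N)^~ true) ((q P X N)^~ false) ((cE P X N Y)^~ false) in hkey hDp hMp hMm hpi hQ0 hpQ hV *.
set V := A1 ((q P X N)^~ true) ((q P X N)^~ false) - PI ^+ 2 in hkey hDp hMp hMm hpi hQ0 hpQ hV *.
set MP := Mp ((q P X N)^~ true) ((q P X N)^~ false) ((cE P X N Y)^~ true)
            ((cE P X N Y)^~ false) Ylow Yhigh in hkey hDp hMp hMm hpi hQ0 hpQ hV *.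
set MM := Mm ((q P X N)^~ true) ((q P X N)^~ false) ((cE P X N Y)^~ true)
            ((cE P X N Y)^~ false) Ylow Yhigh in hkey hDp hMp hMm hpi hQ0 hpQ hV *.
set DP := Dp ((q P X N)^~ true) ((q P X N)^~ false) ((cE P X N Y)^~ true)
            ((cE P X N Y)^~ false) in hkey hDp hMp hMm hpi hQ0 hpQ hV *.
set DL := delta ((q P X N)^~ true) ((q P X N)^~ false) ((cE P X N Y)^~ true)
            ((cE P X N Y)^~ false) in hkey hDp hMp hMm hpi hQ0 hpQ hV *.
have hPQ : 0 < PI * QQ by rewrite mulr_gt0.
have LB : ((s1 + s0) * (1 - PI) - MM) / (PI * QQ) <= DP.
  by rewrite hDp ler_pM2r ?invr_gt0 //; lra.
have UB : DP <= (MP - PI * (s1 + s0)) / (PI * QQ).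
  by rewrite hDp ler_pM2r ?invr_gt0 //; lra.
have constr : forall D0, ((s1 + s0) * (1 - PI) - MM) / (PI * QQ) <= D0 ->
    D0 <= (MP - PI * (s1 + s0)) / (PI * QQ) ->
  exists Y' : T -> R, [/\ standing P X Y' N Ylow Yhigh,
    (forall n, Y_ P Y' N n = Y_ P Y N n),
    deltaW P X Y' N = (Bs - (s1 + s0) * PI) - D0 * V & Dpar P X Y' = D0].
  move=> D0 h1 h2.
  move: h1; rewrite ler_pdivrMr // => h1.
  move: h2; rewrite ler_pdivlMr // => h2.
  pose Tt := D0 * (PI * QQ) + PI * (s1 + s0).
  have hT1 : s1 + s0 - MM <= Tt by rewrite /Tt; lra.
  have hT2 : Tt <= MP by rewrite /Tt; lra.
  have [s1' [s0' [hb1' hb0' hs' hS]]] := sharp _ _ _ _ _ _ hq1 hq0 hb1 hb0 Tt hT1 hT2.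
  pose h := fun n (x : bool) => (if x then s1' n else s0' n) / q P X N n x.
  pose Y' := fun w => h (N w) (X w).
  have iY' : P.-integrable setT (EFin \o Y') := int_h P X N mX mN h.
  have mY' : measurable_fun setT Y' := meas_h P X N mX mN h.
  have cY : forall n x, cE P X N Y' n x = if x then s1' n else s0' n.
    move=> n x; rewrite /Y' (cE_h P X N mX mN h) /h.
    have [q0|qp] := eqVneq (q P X N n x) 0; last by rewrite divfK.
    rewrite q0 mulr0; case: x q0 => q0 /=.
    - by have := hb1' n; rewrite /= q0 !mulr0 => /andP[? ?]; lra.
    - by have := hb0' n; rewrite /= q0 !mulr0 => /andP[? ?]; lra.
  have e1 : (cE P X N Y')^~ true = s1' by apply: funext => n; rewrite cY.
  have e0 : (cE P X N Y')^~ false = s0' by apply: funext => n; rewrite cY.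
  have [hB' hS'] := BB ((q P X N)^~ true) ((q P X N)^~ false) _ _ _ _ hs'.
  rewrite -/Bs -/s1 -/s0 in hB' hS'.
  have hDp' : Dp ((q P X N)^~ true) ((q P X N)^~ false) s1' s0' = D0.
    rewrite (DpE _ _ s1' s0' hsum hpi hQ0) -/PI -/QQ hS'.
    rewrite (_ : S1 s1' = Tt) // /Tt.
    by rewrite addrK mulfK // gt_eqF.
  exists Y'; split.
  - split => //; split => //; first by exists n0.
    move=> x n qpos.
    have -> : condE P (evX X x `&` evN N n) Y' = cE P X N Y' n x / q P X N n x by [].
    have qp : 0 < q P X N n x := qpos.
    rewrite cY ler_pdivlMr // ler_pdivrMr //.
    by clear qpos; case: x qp => qp; [exact: hb1'|exact: hb0'].
  - by move=> n; rewrite (Y_E P X N mX mN Y') // (Y_E P X N mX mN Y) // !cY hs'.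
  - rewrite (T_delta P X N Y') // e1 e0.
    have k' := key _ _ s1' s0' _ _ hq1 hq0 hb1' hb0' hsum hpi hQ0.
    rewrite hB' hS' hDp' -/PI -/V in k'.
    lra.
  - by rewrite (T_Dpar P X N) // e1 e0.
split.
- move=> hd; rewrite LB /= le_min UB /= ler_pdivlMr //; lra.
- move=> hd; rewrite ge_max LB UB /= andbT ler_pdivrMr //; lra.
- move=> D0 /andP[h1]; rewrite le_min => /andP[h2 h3].
  have [Y' [st' hY' hd' hD']] := constr D0 h1 h2.
  exists d, T, P, X, Y', N; split; [exact: st' | by move=> n; split | | exact: hD'].
  rewrite hd'; move: h3; rewrite ler_pdivlMr // => h3; lra.
- move=> D0 /andP[]; rewrite ge_max => /andP[h1 h3] h2.
  have [Y' [st' hY' hd' hD']] := constr D0 h1 h2.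
  exists d, T, P, X, Y', N; split; [exact: st' | by move=> n; split | | exact: hD'].
  rewrite hd'; move: h3; rewrite ler_pdivrMr // => h3; lra.
Qed.
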